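(* Let $G$ be a $(C_4,\text{diamond})$-free graph and $1\le k\le |V(G)|-1$. Let $e=ab$ be an edge of $G$ such that $G\setminus\{a,b\}$ is connected. Then the set of edges $AB$ of $F_k(G)$ with $A\triangle B=\{a,b\}$ forms a ladder class of $F_k(G)$.
   Context: $F_k(G)$ is the graph on the $k$-subsets of $V(G)$ with $A,B$ adjacent iff $A\triangle B$ is an edge of $G$. A diamond is $K_4$ minus an edge; $(C_4,\text{diamond})$-free means no induced $4$-cycle and no induced diamond. A ladder is a graph isomorphic to $K_2\square P_m$, $m\ge1$ (with $K_2$ on $\{x,y\}$ and $P_m$ the path $v_1\cdots v_{m+1}$); for $m\ge2$ its rungs are the edges $(x,v_i)(y,v_i)$, and for $m=1$ the rungs may be either pair of disjoint edges. Two edges of a graph $F$ are connected by a ladder if some induced subgraph of $F$ isomorphic to a ladder has them as rungs; the ladder classes are the equivalence classes of the (smallest equivalence relation containing) this relation on $E(F)$. *)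

(* Defs.v *)
From Stdlib Require Import Relation_Operators.
From mathcomp Require Import all_boot.
Set Implicit Arguments. Unset Strict Implicit. Unset Printing Implicit Defensive.

Definition simple_graph (V : finType) (r : rel V) : Prop :=
  symmetric r /\ irreflexive r.

Definition induced_embedding (U V : finType) (rU : rel U) (r : rel V)
  (f : U -> V) : Prop :=
  injective f /\ forall u v, r (f u) (f v) = rU u v.

Definition induced_sub (U V : finType) (rU : rel U) (r : rel V) : Prop :=
  exists f : U -> V, induced_embedding rU r f.

Definition C4_rel : rel 'I_4 :=
  fun u v => ((val u).+1 %% 4 == val v) || ((val v).+1 %% 4 == val u).

Definition diamond_rel : rel 'I_4 :=
  fun u v => (u != v) &&
    ~~ (((val u == 2) && (val v == 3)) || ((val u == 3) && (val v == 2))).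

Definition C4_diamond_free (V : finType) (r : rel V) : Prop :=
  ~ induced_sub C4_rel r /\ ~ induced_sub diamond_rel r.

Definition edges (V : finType) (r : rel V) : {set {set V}} :=
  [set e : {set V} | [exists x, exists y, r x y && (e == [set x; y])]].

Definition symdiff (T : finType) (A B : {set T}) : {set T} :=
  (A :\: B) :|: (B :\: A).

Definition kset (T : finType) (k : nat) := {A : {set T} | #|A| == k}.

Definition Fk_rel (T : finType) (g : rel T) (k : nat) : rel (kset T k) :=
  fun A B => symdiff (val A) (val B) \in edges g.

(* Ladder K2 [] P_m on bool * 'I_(m+1): K2 on bool, path v_0 ... v_m. *)
Definition ladder_rel (m : nat) : rel (bool * 'I_m.+1) :=
  fun x y => ((x.1 == y.1) && (((val x.2).+1 == val y.2) || ((val y.2).+1 == val x.2)))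
          || ((x.1 != y.1) && (x.2 == y.2)).

(* Two edges connected by a ladder: they are rungs of an induced ladder.
   For m >= 2 the rungs are the edges (x,v_i)(y,v_i); for m = 1 the rungs may
   be either pair of disjoint edges of the 4-cycle. *)
Definition ladder_connected (V : finType) (r : rel V) (e1 e2 : {set V}) : Prop :=
  exists m : nat, 1 <= m /\
  exists f : bool * 'I_m.+1 -> V, induced_embedding (@ladder_rel m) r f /\
   ((exists i j : 'I_m.+1,
       e1 = [set f (false, i); f (true, i)] /\ e2 = [set f (false, j); f (true, j)])
    \/
    (m = 1 /\ exists i j : 'I_m.+1, val i = 0 /\ val j = 1 /\
       e1 = [set f (false, i); f (false, j)] /\ e2 = [set f (true, i); f (true, j)])).

Definition ladder_equiv (V : finType) (r : rel V) : {set V} -> {set V} -> Prop :=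
  clos_refl_sym_trans {set V} (@ladder_connected V r).

Definition ladder_class (V : finType) (r : rel V) (C : {set {set V}}) : Prop :=
  exists e0, e0 \in edges r /\
    forall e, e \in C <-> (e \in edges r /\ ladder_equiv r e0 e).

Definition connected_minus2 (T : finType) (g : rel T) (a b : T) : Prop :=
  forall x y, x \notin [set a; b] -> y \notin [set a; b] ->
    connect [rel u v | g u v && (u \notin [set a; b]) && (v \notin [set a; b])] x y.
Arguments Fk_rel {T} g k.

(* Main.v *)
Require Import Defs.
From Stdlib Require Import Relation_Operators.
From mathcomp Require Import all_boot zify.
Set Implicit Arguments. Unset Strict Implicit. Unset Printing Implicit Defensive.

Lemma ucn (T : finType) (g : rel T) : simple_graph g -> C4_diamond_free g ->
  forall x y c d, x != y -> ~~ g x y -> g x c -> g c y -> g x d -> g d y -> c = d.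
Proof.
move=> [gs gi] [nC nD] x y c d xy nxy xc cy xd dy.
apply/eqP/negPn/negP => cd.
have cx : g c x by rewrite gs. have yc : g y c by rewrite gs.
have dx : g d x by rewrite gs. have yd : g y d by rewrite gs.
have yx : g y x = false by rewrite gs; exact: negbTE.
have gxy : g x y = false by exact: negbTE.
have xx := gi x; have yy := gi y; have cc := gi c; have dd := gi d.
have neq : forall u v, g u v -> u != v.
  by move=> u v huv; apply/eqP => e; rewrite e gi in huv.
have nxc := neq _ _ xc; have ncy := neq _ _ cy; have nxd := neq _ _ xd; have ndy := neq _ _ dy.
have ncx : c != x by rewrite eq_sym. have nyc : y != c by rewrite eq_sym.
have ndx : d != x by rewrite eq_sym. have nyd : y != d by rewrite eq_sym.
have nyx : y != x by rewrite eq_sym. have ndc : d != c by rewrite eq_sym.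
case gcd: (g c d).
- apply: nD.
  have dc : g d c by rewrite gs.
  exists (fun u : 'I_4 => nth x [:: c; d; x; y] u); split.
  + by move=> [[|[|[|[|u]]]] Hu] [[|[|[|[|v]]]] Hv] //= E; apply: val_inj => //=;
      move: E; rewrite ?(eqxx) //; move/eqP; rewrite ?(negbTE cd, negbTE ncx, negbTE ncy, negbTE ndc,
      negbTE ndx, negbTE ndy, negbTE nxc, negbTE nxd, negbTE xy, negbTE nyc, negbTE nyd, negbTE nyx).
  + by move=> [[|[|[|[|u]]]] Hu] [[|[|[|[|v]]]] Hv] //=;
      rewrite /diamond_rel /= ?(gcd, dc, cx, cy, dx, dy, xc, yc, xd, yd, xx, yy, cc, dd, gxy, yx).
- apply: nC.
  have dc : g d c = false by rewrite gs.
  exists (fun u : 'I_4 => nth x [:: x; c; y; d] u); split.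
  + by move=> [[|[|[|[|u]]]] Hu] [[|[|[|[|v]]]] Hv] //= E; apply: val_inj => //=;
      move: E; rewrite ?(eqxx) //; move/eqP; rewrite ?(negbTE cd, negbTE ncx, negbTE ncy, negbTE ndc,
      negbTE ndx, negbTE ndy, negbTE nxc, negbTE nxd, negbTE xy, negbTE nyc, negbTE nyd, negbTE nyx).
  + by move=> [[|[|[|[|u]]]] Hu] [[|[|[|[|v]]]] Hv] //=;
      rewrite /C4_rel /= ?(gcd, dc, cx, cy, dx, dy, xc, yc, xd, yd, xx, yy, cc, dd, gxy, yx).
Qed.


Lemma edge_pick (T : finType) (g : rel T) (D : {set T}) v : simple_graph g ->
  D \in edges g -> v \in D -> exists w, D = [set v; w] /\ g v w.
Proof.
move=> [gs gi]; rewrite inE => /existsP[x /existsP[y /andP[gxy /eqP ->]]].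
case/set2P => ->; first by exists y.
by exists x; rewrite setUC gs.
Qed.

Lemma edge_in (T : finType) (g : rel T) x y : g x y -> [set x; y] \in edges g.
Proof. by move=> gxy; rewrite inE; apply/existsP; exists x; apply/existsP; exists y; rewrite gxy eqxx. Qed.

Lemma edge_card (T : finType) (g : rel T) (D : {set T}) : simple_graph g ->
  D \in edges g -> #|D| = 2.
Proof.
move=> [gs gi]; rewrite inE => /existsP[x /existsP[y /andP[gxy /eqP ->]]].
rewrite cards2; case: eqP => // e; by rewrite e gi in gxy.
Qed.

Lemma no_edge3 (T : finType) (g : rel T) (D : {set T}) a b x :
  a != b -> a != x -> b != x -> a \in D -> b \in D -> x \in D -> D \notin edges g.
Proof.
move=> ab ax bx aD bD xD; apply/negP; rewrite inE => /existsP[p /existsP[q /andP[_ /eqP E]]].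
move: aD bD xD; rewrite E => /set2P[] ea /set2P[] eb /set2P[] ex; subst;
  by rewrite ?eqxx in ab ax bx.
Qed.

Lemma sq_share (T : finType) (g : rel T) (E1 E2 E3 E4 : {set T}) :
  simple_graph g -> C4_diamond_free g ->
  E1 \in edges g -> E2 \in edges g -> E3 \in edges g -> E4 \in edges g ->
  (forall v, (v \in E3) (+) (v \in E4) = (v \in E1) (+) (v \in E2)) ->
  E1 != E2 -> symdiff E1 E2 \notin edges g ->
  (exists c, c \in E1 /\ c \in E2) -> E3 = E1 \/ E3 = E2.
Proof.
move=> sg fr e1 e2 e3 e4 H n12 nsd [c [c1 c2]].
have [gs gi] := sg.
have [x [E1e cx]] := edge_pick sg e1 c1.
have [y [E2e cy]] := edge_pick sg e2 c2.
have neq : forall u v, g u v -> u != v.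
  by move=> u v huv; apply/eqP => e; rewrite e gi in huv.
have xy : x != y by apply: contraNneq n12 => e; rewrite E1e E2e e.
have ncx := neq _ _ cx; have ncy := neq _ _ cy.
have nxc : x != c by rewrite eq_sym. have nyc : y != c by rewrite eq_sym.
have yx : y != x by rewrite eq_sym.
have H' : forall v, (v \in E3) (+) (v \in E4) = (v == x) || (v == y).
  move=> v; rewrite H E1e E2e !inE.
  case: (eqVneq v c) => [->|vc]; first by rewrite ?(eqxx, negbTE ncx, negbTE ncy, negbTE nxc, negbTE nyc).
  case: (eqVneq v x) => [->|vx]; first by rewrite ?(eqxx, negbTE xy, negbTE yx, negbTE vc) //= ?(negbTE xy).
  by case: (eqVneq v y).
have nxy : ~~ g x y.
  apply: contra nsd => gxy; suff -> : symdiff E1 E2 = [set x; y] by exact: edge_in.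
  apply/setP => v; rewrite /symdiff E1e E2e !inE.
  case: (eqVneq v c) => [->|vc]; first by rewrite ?(eqxx, negbTE ncx, negbTE ncy, negbTE nxc, negbTE nyc).
  case: (eqVneq v x) => [->|vx]; first by rewrite ?(eqxx, negbTE xy, negbTE yx, negbTE vc) //= ?(negbTE xy).
  by case: (eqVneq v y).
have Hx := H' x; rewrite eqxx /= in Hx.
case x3: (x \in E3); rewrite x3 /= in Hx.
- have [z [E3e xz]] := edge_pick sg e3 x3.
  have zx : z != x by rewrite eq_sym; exact: neq.
  have zy : z != y by apply: contraNneq nxy => <-.
  have z4 : z \in E4 by have := H' z; rewrite E3e !inE eqxx orbT (negbTE zx) (negbTE zy) => /negbFE.
  have y4 : y \in E4.
    have := H' y; rewrite E3e !inE eqxx orbT eq_sym (negbTE xy) eq_sym (negbTE zy) /=.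
    by [].
  have [w [E4e zw]] := edge_pick sg e4 z4.
  move: y4; rewrite E4e => /set2P[] yw; first by rewrite yw eqxx in zy.
  rewrite -yw in zw.
  have czx := ucn sg fr xy nxy (etrans (gs x c) cx) cy xz zw.
  left; by rewrite E3e E1e czx setUC.
- have x4 := Hx.
  have [z [E4e xz]] := edge_pick sg e4 x4.
  have zx : z != x by rewrite eq_sym; exact: neq.
  have zy : z != y by apply: contraNneq nxy => <-.
  have z3 : z \in E3.
    by have := H' z; rewrite E4e !inE eqxx orbT (negbTE zx) (negbTE zy) addbT => /negbFE.
  have y3 : y \in E3.
    have := H' y; rewrite E4e !inE eqxx orbT eq_sym (negbTE xy) eq_sym (negbTE zy) /=.
    by rewrite addbF.
  have [w [E3e zw]] := edge_pick sg e3 z3.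
  move: y3; rewrite E3e => /set2P[] yw; first by rewrite yw eqxx in zy.
  rewrite -yw in zw.
  have czx := ucn sg fr xy nxy (etrans (gs x c) cx) cy xz zw.
  right; by rewrite E2e czx yw.
Qed.


Ltac bool4 H v E1 E2 E3 E4 :=
  move: (H v); case: (v \in E1); case: (v \in E2); case: (v \in E3); case: (v \in E4).

Lemma sq_K (T : finType) (g : rel T) (E1 E2 E3 E4 : {set T}) :
  simple_graph g -> C4_diamond_free g ->
  E1 \in edges g -> E2 \in edges g -> E3 \in edges g -> E4 \in edges g ->
  (forall v, (v \in E1) (+) (v \in E2) (+) (v \in E3) (+) (v \in E4) = false) ->
  E1 != E2 -> E2 != E3 -> symdiff E1 E2 \notin edges g -> symdiff E2 E3 \notin edges g ->
  E1 = E3.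
Proof.
move=> sg fr e1 e2 e3 e4 H n12 n23 s12 s23.
have sdE : forall A B : {set T}, forall v, (v \in symdiff A B) = (v \in A) (+) (v \in B).
  by move=> A B v; rewrite /symdiff !inE; case: (v \in A); case: (v \in B).
have eqE : forall A B : {set T}, (forall v, (v \in A) = (v \in B)) -> A = B.
  by move=> A B h; apply/setP => v; exact: h.
case: (pickP (fun c => (c \in E1) && (c \in E2))) => [c /andP[c1 c2] | n12'].
  have h : forall v, (v \in E3) (+) (v \in E4) = (v \in E1) (+) (v \in E2).
    by move=> v; bool4 H v E1 E2 E3 E4.
  case: (sq_share sg fr e1 e2 e3 e4 h n12 s12 (ex_intro _ c (conj c1 c2))) => //.
  by move=> E; rewrite E eqxx in n23.
case: (pickP (fun c => (c \in E2) && (c \in E3))) => [c /andP[c2 c3] | n23'].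
  have h : forall v, (v \in E1) (+) (v \in E4) = (v \in E3) (+) (v \in E2).
    by move=> v; bool4 H v E1 E2 E3 E4.
  have n32 : E3 != E2 by rewrite eq_sym.
  have s32 : symdiff E3 E2 \notin edges g.
    suff -> : symdiff E3 E2 = symdiff E2 E3 by [].
    by apply: eqE => v; rewrite !sdE addbC.
  case: (sq_share sg fr e3 e2 e1 e4 h n32 s32 (ex_intro _ c (conj c3 c2))) => //.
  by move=> E; rewrite E eqxx in n12.
case: (pickP (fun c => (c \in E3) && (c \in E4))) => [c /andP[c3 c4] | n34'].
  have h : forall v, (v \in E1) (+) (v \in E2) = (v \in E3) (+) (v \in E4).
    by move=> v; bool4 H v E1 E2 E3 E4.
  have n34 : E3 != E4.
    apply/eqP => E; move/eqP: n12; apply; apply: eqE => v.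
    by move: (H v); rewrite E; case: (v \in E1); case: (v \in E2); case: (v \in E4).
  have s34 : symdiff E3 E4 \notin edges g.
    suff -> : symdiff E3 E4 = symdiff E1 E2 by [].
    by apply: eqE => v; rewrite !sdE; bool4 H v E1 E2 E3 E4.
  case: (sq_share sg fr e3 e4 e1 e2 h n34 s34 (ex_intro _ c (conj c3 c4))) => //.
  move=> E; exfalso; move/eqP: n23; apply; apply: eqE => v.
  by move: (H v); rewrite E; case: (v \in E4); case: (v \in E2); case: (v \in E3).
case: (pickP (fun c => (c \in E4) && (c \in E1))) => [c /andP[c4 c1] | n41'].
  have h : forall v, (v \in E3) (+) (v \in E2) = (v \in E1) (+) (v \in E4).
    by move=> v; bool4 H v E1 E2 E3 E4.
  have n14 : E1 != E4.
    apply/eqP => E; move/eqP: n23; apply; apply: eqE => v.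
    by move: (H v); rewrite E; case: (v \in E4); case: (v \in E2); case: (v \in E3).
  have s14 : symdiff E1 E4 \notin edges g.
    suff -> : symdiff E1 E4 = symdiff E2 E3 by [].
    by apply: eqE => v; rewrite !sdE; bool4 H v E1 E2 E3 E4.
  case: (sq_share sg fr e1 e4 e3 e2 h n14 s14 (ex_intro _ c (conj c1 c4))) => E;
    first by rewrite E.
  - exfalso; move/eqP: n12; apply; apply: eqE => v.
    by move: (H v); rewrite E; case: (v \in E1); case: (v \in E2); case: (v \in E4).
apply/eqP; rewrite eq_sym eqEcard (edge_card sg e1) (edge_card sg e3) leqnn andbT.
apply/subsetP => v v3.
have v2 : (v \in E2) = false by move: (n23' v); rewrite v3 andbT.
have v4 : (v \in E4) = false by move: (n34' v); rewrite v3.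
by move: (H v); rewrite v3 v4 v2; case: (v \in E1).
Qed.

Lemma sdE (T : finType) (A B : {set T}) v : (v \in symdiff A B) = (v \in A) (+) (v \in B).
Proof. by rewrite /symdiff !inE; case: (v \in A); case: (v \in B). Qed.

Lemma symdiffC (T : finType) (A B : {set T}) : symdiff A B = symdiff B A.
Proof. by apply/setP => v; rewrite !sdE addbC. Qed.

Lemma K_F (T : finType) (g : rel T) k (P Q R S : kset T k) :
  simple_graph g -> C4_diamond_free g ->
  Fk_rel g k P Q -> Fk_rel g k Q R -> Fk_rel g k R S -> Fk_rel g k S P ->
  ~~ Fk_rel g k P R -> ~~ Fk_rel g k Q S -> P != R -> Q != S ->
  symdiff (val P) (val Q) = symdiff (val S) (val R).
Proof.
move=> sg fr pq qr rs sp npr nqs nPR nQS.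
rewrite [RHS]symdiffC.
have vne : forall X Y : kset T k, X != Y -> forall Z : kset T k,
    symdiff (val X) (val Z) != symdiff (val Z) (val Y).
  move=> X Y nXY Z; apply: contra nXY => /eqP E; apply/eqP; apply: val_inj.
  apply/setP => v; move/setP: E => /(_ v); rewrite !sdE.
  by case: (v \in val X); case: (v \in val Y); case: (v \in val Z).
apply: (sq_K sg fr pq qr rs sp).
- by move=> v; rewrite !sdE; case: (v \in val P); case: (v \in val Q); case: (v \in val R);
     case: (v \in val S).
- exact: (vne P R nPR Q).
- exact: vne nQS R.
- suff -> : symdiff (symdiff (val P) (val Q)) (symdiff (val Q) (val R)) = symdiff (val P) (val R)
    by [].
  apply/setP => v; rewrite !sdE.
  by case: (v \in val P); case: (v \in val Q); case: (v \in val R).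
- suff -> : symdiff (symdiff (val Q) (val R)) (symdiff (val R) (val S)) = symdiff (val Q) (val S)
    by [].
  apply/setP => v; rewrite !sdE.
  by case: (v \in val S); case: (v \in val Q); case: (v \in val R).
Qed.


Lemma pair_sd (T : finType) k (A B P Q : kset T k) :
  [set A; B] = [set P; Q] -> symdiff (val A) (val B) = symdiff (val P) (val Q).
Proof.
move=> E.
have hA : A \in [set P; Q] by rewrite -E !inE eqxx.
have hB : B \in [set P; Q] by rewrite -E !inE eqxx orbT.
have hP : P \in [set A; B] by rewrite E !inE eqxx.
have hQ : Q \in [set A; B] by rewrite E !inE eqxx orbT.
case/set2P: hA => eA; case/set2P: hB => eB; subst => //; try by rewrite symdiffC.
- by case/set2P: hQ => ->.
- by case/set2P: hP => ->.
Qed.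

Lemma ladder_sd (T : finType) (g : rel T) k (e1 e2 : {set kset T k}) :
  simple_graph g -> C4_diamond_free g -> ladder_connected (Fk_rel g k) e1 e2 ->
  exists X Y Z W, [/\ e1 = [set X; Y], e2 = [set Z; W], Fk_rel g k X Y, Fk_rel g k Z W &
     symdiff (val X) (val Y) = symdiff (val Z) (val W)].
Proof.
move=> sg fr [m [m1 [f [[finj femb] H]]]].
have rung : forall n, n < m.+1 -> symdiff (val (f (false, inord n))) (val (f (true, inord n)))
    = symdiff (val (f (false, ord0))) (val (f (true, ord0))).
  elim=> [|n IH] Hn.
    by rewrite (_ : inord 0 = ord0) //; apply: val_inj; rewrite /= inordK.
  have Hn' : n < m.+1 by apply: ltnW.
  rewrite -(IH Hn'); symmetry; apply: (K_F sg fr).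
  all: try (rewrite femb /ladder_rel /= -?val_eqE /= ?inordK ?eqxx ?orbT //=; lia).
  - by apply/eqP => /finj /(congr1 fst).
  - by apply/eqP => /finj /(congr1 fst).
case: H => [[i [j [e1E e2E]]] | [m1' [i [j [vi [vj [e1E e2E]]]]]]].
  exists (f (false, i)), (f (true, i)), (f (false, j)), (f (true, j)); split => //.
  - by rewrite femb /ladder_rel /= eqxx.
  - by rewrite femb /ladder_rel /= eqxx.
  - rewrite -(inord_val i) -(inord_val j) !rung //.
exists (f (false, i)), (f (false, j)), (f (true, i)), (f (true, j)); split => //.
- by rewrite femb /ladder_rel /= vi vj.
- by rewrite femb /ladder_rel /= vi vj.
subst m.
apply: (K_F sg fr).
all: try (by rewrite femb /ladder_rel /= -?val_eqE /= ?vi ?vj ?eqxx).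
- by apply/eqP => /finj /(congr1 fst).
- by apply/eqP => /finj /(congr1 snd) /(congr1 val); rewrite /= vi vj.
Qed.


Definition mv (T : finType) k (A : kset T k) (x y : T) : kset T k :=
  odflt A (insub (val A :\ x :|: [set y])).

Lemma val_mv (T : finType) k (A : kset T k) x y : x \in val A -> y \notin val A ->
  val (mv A x y) = val A :\ x :|: [set y].
Proof.
move=> xA yA; rewrite /mv; case: insubP => [B _ -> // | h]; exfalso; move/negP: h; apply.
rewrite setUC cardsU1 !inE (negbTE yA) andbF /=.
have hc := cardsD1 x (val A); rewrite xA in hc; move: (eqP (valP A)); move=> e; apply/eqP; apply: etrans e; by rewrite hc.
Qed.

Lemma Fk_sym (T : finType) (g : rel T) k (A B : kset T k) : Fk_rel g k A B = Fk_rel g k B A.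
Proof. by rewrite /Fk_rel symdiffC. Qed.

Lemma step (T : finType) (g : rel T) k (a b x y : T) (A : kset T k) :
  simple_graph g -> g a b -> g x y ->
  a \in val A -> b \notin val A -> x \in val A -> y \notin val A ->
  x != a -> x != b -> y != a -> y != b ->
  ladder_connected (Fk_rel g k) [set A; mv A a b] [set mv A x y; mv (mv A x y) a b].
Proof.
move=> sg gab gxy aA bA xA yA xa xb ya yb.
have [gs gi] := sg.
have ab : a != b by apply/eqP => e; rewrite e gi in gab.
have xy : x != y by apply/eqP => e; rewrite e gi in gxy.
have ba : b != a by rewrite eq_sym. have yx : y != x by rewrite eq_sym.
have ax : a != x by rewrite eq_sym. have bx : b != x by rewrite eq_sym.
have ay : a != y by rewrite eq_sym. have by_ : b != y by rewrite eq_sym.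
set A1 := mv A a b. set A2 := mv A x y. set A3 := mv A2 a b.
have v1 : val A1 = val A :\ a :|: [set b] by rewrite val_mv.
have v2 : val A2 = val A :\ x :|: [set y] by rewrite val_mv.
have aA2 : a \in val A2 by rewrite v2 !inE ax aA.
have bA2 : b \notin val A2 by rewrite v2 !inE (negbTE by_) (negbTE bA) andbF.
have v3 : val A3 = val A2 :\ a :|: [set b] by rewrite val_mv.
have E := (negbTE ab, negbTE ba, negbTE xa, negbTE ax, negbTE xb, negbTE bx, negbTE ya, negbTE ay,
           negbTE yb, negbTE by_, negbTE xy, negbTE yx).
have M := (aA, negbTE bA, xA, negbTE yA).
have bf : forall (P Q : {set T}) (S : {set T}),
  (forall v, v != a -> v != b -> v != x -> v != y -> (v \in P) = (v \in Q)) ->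
  ((a \in S) = (a \in P) (+) (a \in Q)) -> ((b \in S) = (b \in P) (+) (b \in Q)) ->
  ((x \in S) = (x \in P) (+) (x \in Q)) -> ((y \in S) = (y \in P) (+) (y \in Q)) ->
  (forall v, v \in S -> [|| v == a, v == b, v == x | v == y]) ->
  symdiff P Q = S.
  move=> P Q S hv ha hb hx hy hS; apply/setP => v; rewrite sdE.
  case: (eqVneq v a) => [->|va]; first by rewrite ha.
  case: (eqVneq v b) => [->|vb]; first by rewrite hb.
  case: (eqVneq v x) => [->|vx]; first by rewrite hx.
  case: (eqVneq v y) => [->|vy]; first by rewrite hy.
  rewrite hv // addbb; apply/esym/negP => /hS; by rewrite (negbTE va) (negbTE vb) (negbTE vx) (negbTE vy) /= ?orbF ?andbT.
have in2 : forall p q v, v \in [set p; q] -> [|| v == a, v == b, v == x | v == y] ->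
    [|| v == a, v == b, v == x | v == y] by [].
have s01 : symdiff (val A) (val A1) = [set a; b].
  apply: bf.
  - by move=> v va vb _ _; rewrite v1 !inE (negbTE va) (negbTE vb) /= orbF.
  - by rewrite v1 !inE ?E ?eqxx ?M.
  - by rewrite v1 !inE ?E ?eqxx ?M.
  - by rewrite v1 !inE ?E ?eqxx ?M.
  - by rewrite v1 !inE ?E ?eqxx ?M.
  - by move=> v; rewrite !inE => /orP[]->; rewrite ?orbT.
have s02 : symdiff (val A) (val A2) = [set x; y].
  apply: bf.
  - by move=> v _ _ vx vy; rewrite v2 !inE (negbTE vx) (negbTE vy) /= ?orbF ?andbT.
  - by rewrite v2 !inE ?E ?eqxx ?M.
  - by rewrite v2 !inE ?E ?eqxx ?M.
  - by rewrite v2 !inE ?E ?eqxx ?M.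
  - by rewrite v2 !inE ?E ?eqxx ?M.
  - by move=> v; rewrite !inE => /orP[]->; rewrite ?orbT.
have s13 : symdiff (val A1) (val A3) = [set x; y].
  apply: bf.
  - by move=> v va vb vx vy; rewrite v3 v2 v1 !inE (negbTE vx) (negbTE vy) (negbTE va) (negbTE vb) /= ?orbF ?andbT.
  - by rewrite v3 v2 v1 !inE ?E ?eqxx ?M.
  - by rewrite v3 v2 v1 !inE ?E ?eqxx ?M.
  - by rewrite v3 v2 v1 !inE ?E ?eqxx ?M.
  - by rewrite v3 v2 v1 !inE ?E ?eqxx ?M.
  - by move=> v; rewrite !inE => /orP[]->; rewrite ?orbT.
have s23 : symdiff (val A2) (val A3) = [set a; b].
  apply: bf.
  - by move=> v va vb vx vy; rewrite v3 v2 !inE (negbTE vx) (negbTE vy) (negbTE va) (negbTE vb) /= ?orbF ?andbT.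
  - by rewrite v3 v2 !inE ?E ?eqxx ?M.
  - by rewrite v3 v2 !inE ?E ?eqxx ?M.
  - by rewrite v3 v2 !inE ?E ?eqxx ?M.
  - by rewrite v3 v2 !inE ?E ?eqxx ?M.
  - by move=> v; rewrite !inE => /orP[]->; rewrite ?orbT.
have n03 : ~~ Fk_rel g k A A3.
  apply: (@no_edge3 _ _ _ a b x) => //; rewrite sdE v3 v2 !inE ?E ?eqxx ?M //.
have n12 : ~~ Fk_rel g k A1 A2.
  apply: (@no_edge3 _ _ _ a b x) => //; rewrite sdE v1 v2 !inE ?E ?eqxx ?M //.
have f01 : Fk_rel g k A A1 by rewrite /Fk_rel s01 edge_in.
have f02 : Fk_rel g k A A2 by rewrite /Fk_rel s02 edge_in.
have f13 : Fk_rel g k A1 A3 by rewrite /Fk_rel s13 edge_in.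
have f23 : Fk_rel g k A2 A3 by rewrite /Fk_rel s23 edge_in.
have dg : forall B : kset T k, Fk_rel g k B B = false.
  move=> B; apply/negP; rewrite /Fk_rel (_ : symdiff _ _ = set0).
    by move/(edge_card sg); rewrite cards0.
  by apply/setP => v; rewrite sdE addbb inE.
have aA1 : (a \in val A1) = false by rewrite v1 !inE ?E ?eqxx.
have xA1 : (x \in val A1) by rewrite v1 !inE ?E ?eqxx ?M.
have xA2 : (x \in val A2) = false by rewrite v2 !inE ?E ?eqxx.
have aA3 : (a \in val A3) = false by rewrite v3 !inE ?E ?eqxx.
have xA3 : (x \in val A3) = false by rewrite v3 v2 !inE ?E ?eqxx.
have f10 : Fk_rel g k A1 A by rewrite Fk_sym.
have f20 : Fk_rel g k A2 A by rewrite Fk_sym.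
have f31 : Fk_rel g k A3 A1 by rewrite Fk_sym.
have f32 : Fk_rel g k A3 A2 by rewrite Fk_sym.
have n03' : Fk_rel g k A A3 = false by apply: negbTE.
have n30' : Fk_rel g k A3 A = false by rewrite Fk_sym; apply: negbTE.
have n12' : Fk_rel g k A1 A2 = false by apply: negbTE.
have n21' : Fk_rel g k A2 A1 = false by rewrite Fk_sym; apply: negbTE.
pose f := fun u : bool * 'I_2 => if u.1 then (if val u.2 == 0 then A1 else A3)
                                 else (if val u.2 == 0 then A else A2).
exists 1; split => //; exists f; split; [split|].
- move=> [s i] [t j] e.
  have ea := congr1 (fun B : kset T k => a \in val B) e.
  have ex := congr1 (fun B : kset T k => x \in val B) e.
  move: ea ex {e}; case: s; case: t; case: i => [[|[|i]] Hi] //; case: j => [[|[|j]] Hj] //;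
    rewrite /f /= ?M ?aA1 ?xA1 ?xA2 ?aA3 ?xA3 ?aA2 //;
    by move=> _ _; congr pair; apply: val_inj.
- move=> [s i] [t j].
  case: s; case: t; case: i => [[|[|i]] Hi] //; case: j => [[|[|j]] Hj] //;
    by rewrite /f /ladder_rel /= ?dg ?f01 ?f02 ?f13 ?f23 ?f10 ?f20 ?f31 ?f32 ?n03' ?n30' ?n12' ?n21'.
- left; exists ord0, ord_max; split; by [].
Qed.


Lemma sd_mv (T : finType) k (A : kset T k) (a b : T) :
  a \in val A -> b \notin val A -> a != b ->
  symdiff (val A) (val (mv A a b)) = [set a; b].
Proof.
move=> aA bA ab; apply/setP => v; rewrite sdE val_mv // !inE.
case: (eqVneq v a) => [->|va]; first by rewrite aA (negbTE ab).
case: (eqVneq v b) => [->|vb]; first by rewrite (negbTE bA).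
by rewrite /= orbF addbb.
Qed.

Lemma orient (T : finType) k (A B : kset T k) (a b : T) :
  a != b -> symdiff (val A) (val B) = [set a; b] -> a \in val A ->
  b \notin val A /\ B = mv A a b.
Proof.
move=> ab sd aA.
have mem : forall v, (v \in val A) (+) (v \in val B) = (v == a) || (v == b).
  by move=> v; rewrite -sdE sd !inE.
have aB : (a \in val B) = false by move: (mem a); rewrite eqxx aA; case: (a \in val B).
have same : forall v, v != a -> v != b -> (v \in val A) = (v \in val B).
  move=> v va vb; move: (mem v); rewrite (negbTE va) (negbTE vb).
  by case: (v \in val A); case: (v \in val B).
have bA : b \notin val A.
  apply/negP => bA.
  have bB : (b \in val B) = false by move: (mem b); rewrite eqxx orbT bA; case: (b \in val B).
  have hA := cardsD1 a (val A); have hA' := cardsD1 b (val A :\ a).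
  have hB := cardsD1 a (val B); have hB' := cardsD1 b (val B :\ a).
  rewrite aA in hA; rewrite aB in hB.
  rewrite !inE eq_sym (negbTE ab) bA in hA'. rewrite !inE bB andbF in hB'.
  have e : val A :\ a :\ b = val B :\ a :\ b.
    apply/setP => v; rewrite !inE.
    case: (eqVneq v b) => //= vb; case: (eqVneq v a) => //= va; exact: same.
  move: (eqP (valP A)) (eqP (valP B)); rewrite hA hA' hB hB' e; lia.
split => //; apply: val_inj; rewrite val_mv //; apply/setP => v; rewrite !inE.
case: (eqVneq v a) => [->|va]; first by rewrite aB ?(negbTE ab) ?(eq_sym a b) ?(negbTE ab) ?andbF.
case: (eqVneq v b) => [->|vb]; last by rewrite /= orbF same.
rewrite orbT; move: (mem b); rewrite eqxx orbT (negbTE bA); by case: (b \in val B).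
Qed.

Lemma last_notab (T : finType) (g : rel T) (a b : T) p x :
  x \notin [set a; b] ->
  path [rel u v | g u v && (u \notin [set a; b]) && (v \notin [set a; b])] x p ->
  last x p \notin [set a; b].
Proof.
elim: p x => [|z p IH] x //= xab /andP[/andP[/andP[_ _] zab] pp]; exact: IH.
Qed.

Lemma walk (T : finType) (g : rel T) k (a b : T) : simple_graph g -> g a b ->
  forall p (x : T) (A : kset T k), a \in val A -> b \notin val A -> x \in val A ->
  x \notin [set a; b] ->
  path [rel u v | g u v && (u \notin [set a; b]) && (v \notin [set a; b])] x p ->
  last x p \notin val A ->
  forall B : kset T k, val B = val A :\ x :|: [set last x p] ->
  ladder_equiv (Fk_rel g k) [set A; mv A a b] [set B; mv B a b].
Proof.
move=> sg gab; have [gs gi] := sg.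
have neq : forall u v, g u v -> u != v.
  by move=> u v huv; apply/eqP => e; rewrite e gi in huv.
elim=> [|z p IH] x A aA bA xA xab /=; first by rewrite xA.
move=> /andP[/andP[/andP[gxz _] zab] pp] yA B vB.
set y := last z p in yA vB.
have yab : y \notin [set a; b] by exact: (last_notab zab pp).
move: xab zab yab; rewrite !inE !negb_or => /andP[xa xb] /andP[za zb] /andP[ya yb].
have xz := neq _ _ gxz.
have zab' : z \notin [set a; b] by rewrite !inE negb_or za zb.
rewrite /ladder_equiv.
case zA: (z \in val A).
- (* z in A: first move z to y, then x to z *)
  have zy : z != y by apply: contraTneq zA => ->.
  have v2 := val_mv zA yA.
  set A2 := mv A z y in v2.
  have e1 := IH z A aA bA zA zab' pp yA A2 v2.
  have xA2 : x \in val A2 by rewrite v2 !inE xA xz ?orbT.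
  have zA2 : z \notin val A2 by rewrite v2 !inE eqxx (negbTE zy).
  have aA2 : a \in val A2 by rewrite v2 !inE aA andbT (eq_sym a z) (negbTE za).
  have bA2 : b \notin val A2 by rewrite v2 !inE (negbTE bA) andbF (eq_sym b y) (negbTE yb).
  have st := step sg gab gxz aA2 bA2 xA2 zA2 xa xb za zb.
  have EB : B = mv A2 x z.
    apply: val_inj => /=; rewrite vB val_mv // v2; apply/setP => v; rewrite !inE.
    case: (eqVneq v z) => [->|vz]; first by rewrite zA eq_sym (negbTE xz) (negbTE zy).
    have xy : x != y by apply/eqP => e; move: yA; rewrite -e xA.
    case: (eqVneq v x) => [->|vx] /=; first by rewrite (negbTE xy).
    by rewrite orbF.
  rewrite EB; exact: (rst_trans _ _ _ _ _ e1 (rst_step _ _ _ _ st)).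
- (* z not in A: move x to z, then continue *)
  have zA' : z \notin val A by rewrite zA.
  have st := step sg gab gxz aA bA xA zA' xa xb za zb.
  have v1 := val_mv xA zA'.
  set A1 := mv A x z in v1 st.
  case: (eqVneq y z) => [yz | yz].
    have -> : B = A1 by apply: val_inj => /=; rewrite vB v1 yz.
    exact: (rst_step _ _ _ _ st).
  have aA1 : a \in val A1 by rewrite v1 !inE aA (eq_sym a x) xa.
  have bA1 : b \notin val A1 by rewrite v1 !inE (negbTE bA) andbF (eq_sym b z) (negbTE zb).
  have zA1 : z \in val A1 by rewrite v1 !inE eqxx ?orbT.
  have yA1 : y \notin val A1 by rewrite v1 !inE (negbTE yz) (negbTE yA) andbF.
  apply: (rst_trans _ _ _ _ _ (rst_step _ _ _ _ st) (IH z A1 aA1 bA1 zA1 zab' pp yA1 B _)).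
  apply: (etrans vB); rewrite v1; apply/setP => v; rewrite !inE.
  rewrite -/y -[sval A]/(val A).
  case: (eqVneq v z) => [->|vz] /=; first by rewrite zA andbF (eq_sym z y) (negbTE yz).
  by rewrite orbF.
Qed.


Lemma conn (T : finType) (g : rel T) k (a b : T) : simple_graph g -> g a b ->
  connected_minus2 g a b ->
  forall n (A A' : kset T k), a \in val A -> b \notin val A -> a \in val A' -> b \notin val A' ->
  #|val A :\: val A'| = n ->
  ladder_equiv (Fk_rel g k) [set A; mv A a b] [set A'; mv A' a b].
Proof.
move=> sg gab cm; elim=> [|n IH] A A' aA bA aA' bA' hn.
  have -> : A = A'; last exact: rst_refl.
  apply: val_inj; apply/eqP; rewrite eqEcard.
  have -> : val A \subset val A' by rewrite -setD_eq0 -cards_eq0 hn.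
  have hA : #|val A| = k := eqP (valP A). have hA2 : #|val A'| = k := eqP (valP A'). by rewrite hA hA2 leqnn.
have : 0 < #|val A :\: val A'| by rewrite hn.
case/card_gt0P => x; rewrite inE => /andP[xA' xA].
have : 0 < #|val A' :\: val A|.
  have h1 := cardsID (val A') (val A); have h2 := cardsID (val A) (val A').
  rewrite setIC (eqP (valP A)) in h1; rewrite (eqP (valP A')) in h2.
  lia.
case/card_gt0P => y; rewrite inE => /andP[yA yA'].
have xab : x \notin [set a; b].
  rewrite !inE negb_or; apply/andP; split.
    by apply: contraNneq xA' => ->.
  by apply: contraNneq bA => <-.
have yab : y \notin [set a; b].
  rewrite !inE negb_or; apply/andP; split.
    by apply: contraNneq yA => ->.
  by apply: contraNneq bA' => <-.
have := cm x y xab yab; case/connectP => p pp ey.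
have v1 := val_mv xA yA.
have e1 := @walk T g k a b sg gab p x A aA bA xA xab pp.
rewrite -ey in e1.
have e1' := e1 yA (mv A x y) v1.
apply: (rst_trans _ _ _ _ _ e1').
have ax : a != x by apply: contraNneq xA' => <-.
have by_ : b != y by apply: contraNneq bA' => ->.
have hD : val (mv A x y) :\: val A' = (val A :\: val A') :\ x.
  rewrite v1; apply/setP => v; rewrite !inE.
  case: (eqVneq v y) => [->|vy] /=; first by rewrite yA' /= andbF.
  by rewrite orbF; case: (v != x); case: (v \in val A').
have hc : #|val (mv A x y) :\: val A'| = n.
  rewrite hD; have := cardsD1 x (val A :\: val A'); rewrite !inE xA xA' hn /=.
  rewrite -[sval A]/(val A) -[sval A']/(val A') ; rewrite add1n => -[->] //.
apply: (IH _ _ _ _ aA' bA' hc).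
- by rewrite v1 !inE aA ax.
- by rewrite v1 !inE (negbTE bA) andbF (negbTE by_).
Qed.


Lemma good_exists (T : finType) k (a b : T) : a != b -> 1 <= k <= #|T| - 1 ->
  exists A : kset T k, a \in val A /\ b \notin val A.
Proof.
move=> ab /andP[k1 kT].
set W := ~: [set a; b].
have cW : #|W| = #|T| - 2.
  have := cardsC [set a; b]; rewrite cards2 ab => /= h; rewrite -/W in h; lia.
set s := take k.-1 (enum W).
have ss : size s = k.-1 by rewrite size_takel // -cardE cW; lia.
have us : uniq s by apply: take_uniq; exact: enum_uniq.
have sW : forall v, v \in s -> v \in W by move=> v /mem_take; rewrite mem_enum.
set S := a |: [set v in s].
have aS : a \notin [set v in s] by rewrite inE; apply/negP => /sW; rewrite !inE eqxx.
have bS : b \notin S.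
  rewrite !inE negb_or eq_sym ab /=; apply/negP => /sW; rewrite !inE eqxx orbT.
  by [].
have cS : #|S| == k.
  rewrite cardsU1 aS cardsE (card_uniqP us) ss; apply/eqP; lia.
exists (exist _ S cS); split => //=.
by rewrite !inE eqxx.
Qed.

Unset Implicit Arguments.

Theorem lemma24 (T : finType) (g : rel T) (k : nat) (a b : T) :
  simple_graph g ->
  C4_diamond_free g ->
  1 <= k <= #|T| - 1 ->
  g a b ->
  connected_minus2 g a b ->
  ladder_class (Fk_rel g k)
    [set e : {set kset T k} |
       [exists A, exists B, (e == [set A; B]) && Fk_rel g k A B &&
                            (symdiff (val A) (val B) == [set a; b])]].
Proof.
move=> sg fr hk gab cm.
have [gs gi] := sg.
have ab : a != b by apply/eqP => e; rewrite e gi in gab.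
set C := [set e : {set kset T k} | _].
have inC : forall e, e \in C <-> exists A B, [/\ e = [set A; B], Fk_rel g k A B &
                                     symdiff (val A) (val B) = [set a; b]].
  move=> e; rewrite inE; split.
    by case/existsP => A /existsP[B /andP[/andP[/eqP -> f] /eqP s]]; exists A, B.
  case=> A [B [-> f s]]; apply/existsP; exists A; apply/existsP; exists B.
  by rewrite eqxx f s eqxx.
have CA : forall A : kset T k, a \in val A -> b \notin val A -> [set A; mv A a b] \in C.
  move=> A aA bA; apply/inC; exists A, (mv A a b); split => //.
    by rewrite /Fk_rel sd_mv // edge_in.
  exact: sd_mv.
have inv : forall e1 e2, ladder_equiv (Fk_rel g k) e1 e2 -> (e1 \in C <-> e2 \in C).
  move=> e1 e2; elim=> [x y H | x | x y _ IH | x y z _ IH1 _ IH2].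
  - have [X [Y [Z [W [-> -> fXY fZW sd]]]]] := ladder_sd sg fr H.
    split => /inC[A [B [E _ s]]]; apply/inC.
      by exists Z, W; split => //; rewrite -sd (pair_sd E).
    by exists X, Y; split => //; rewrite sd (pair_sd E).
  - by [].
  - by split => /IH.
  - by split => [/IH1/IH2 | /IH2/IH1].
have [A0 [aA0 bA0]] := good_exists ab hk.
have norm : forall A B : kset T k, symdiff (val A) (val B) = [set a; b] ->
    exists A' : kset T k, [/\ a \in val A', b \notin val A' & [set A; B] = [set A'; mv A' a b]].
  move=> A B s.
  case aA: (a \in val A).
    have [bA EB] := orient ab s aA.
    by exists A; rewrite -EB.
  have aB : a \in val B.
    move/setP: s => /(_ a); rewrite sdE aA !inE eqxx /=; by move=> ->.
  rewrite symdiffC in s.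
  have [bB EA] := orient ab s aB.
  by exists B; rewrite -EA setUC.
exists [set A0; mv A0 a b]; split.
  rewrite inE; apply/existsP; exists A0; apply/existsP; exists (mv A0 a b).
  by rewrite eqxx /Fk_rel sd_mv // edge_in.
move=> e; split.
  case/inC => A [B [-> f s]]; split.
    by rewrite inE; apply/existsP; exists A; apply/existsP; exists B; rewrite f eqxx.
  have [A' [aA' bA' ->]] := norm A B s.
  exact: (@conn _ _ _ _ _ sg gab cm _ A0 A' aA0 bA0 aA' bA' (erefl _)).
case=> _ H; apply/(inv _ _ H); exact: CA.
Qed.
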